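(* Let $r\ge2$, $d\in\{1,\dots,r-1\}$ and let $M\in\mathrm{rep}_{\mathrm{proj}}(K_r,d)$ with $\Delta_M(d)>d(r-d)$. Then there exist $a\in\mathbb N$ (a positive integer) and an exact sequence $(0)\to aP_0(r)\to M\to M_{\min}\to(0)$ in $\mathrm{rep}(K_r)$, where $M_{\min}\in\mathrm{rep}_{\mathrm{proj}}(K_r,d)$ and $\Delta_{M_{\min}}(d)=d(r-d)$.
   Context: $k$ algebraically closed of arbitrary characteristic; vector spaces finite-dimensional. $K_r$: Kronecker quiver with arrows $\gamma_1,\dots,\gamma_r:1\to2$; $A_r=\bigoplus_ik\gamma_i$; for $M=(M_1,M_2,(M(\gamma_i))_i)$, $\psi_M:A_r\otimes_kM_1\to M_2$, $\gamma_i\otimes m\mapsto M(\gamma_i)(m)$; $\Delta_M(d)=\dim_kM_2-d\dim_kM_1$. $\mathrm{rep}_{\mathrm{proj}}(K_r,d)$ is the full subcategory of $M$ with $\psi_M|_{\mathfrak v\otimes M_1}$ injective for every $d$-dimensional subspace $\mathfrak v\subseteq A_r$. $P_0(r)=(0,k)$ is the simple projective representation. *)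

(* Defs.v *)
From HB Require Import structures.
From mathcomp Require Import all_boot all_order all_algebra.
Set Implicit Arguments. Unset Strict Implicit. Unset Printing Implicit Defensive.
Import Order.TTheory GRing.Theory Num.Theory.
Local Open Scope ring_scope.

(* Finite-dimensional representations of the Kronecker quiver K_r over k:
   M_1 = k^dim1, M_2 = k^dim2, and the arrow gamma_i acts as the linear map
   k^dim1 -> k^dim2, v |-> v *m arr i (row-vector convention). *)
Record krep (k : fieldType) (r : nat) := KRep {
  dim1 : nat;
  dim2 : nat;
  arr : 'I_r -> 'M[k]_(dim1, dim2) }.

Definition Delta (k : fieldType) (r : nat) (M : krep k r) (d : nat) : int :=
  (dim2 M)%:Z - (d * dim1 M)%:Z.

(* psi_M on v (x) m, for v = sum_j v_j gamma_j in A_r = k^r. *)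
Definition psi_elem (k : fieldType) (r : nat) (M : krep k r)
    (v : 'rV[k]_r) (m : 'rV[k]_(dim1 M)) : 'rV[k]_(dim2 M) :=
  \sum_(j < r) v 0 j *: (m *m arr M j).

(* rep_proj(K_r, d): for every d-dimensional subspace v of A_r (given by a
   basis, the rows of a row-free d x r matrix V), psi_M restricted to
   v (x) M_1 is injective.  Every element of v (x) M_1 is uniquely
   sum_l (row l V) (x) x_l, so injectivity reads as below. *)
Definition rep_proj (k : fieldType) (r d : nat) (M : krep k r) : Prop :=
  forall V : 'M[k]_(d, r), row_free V ->
  forall x : 'I_d -> 'rV[k]_(dim1 M),
    \sum_(l < d) @psi_elem k r M (row l V) (x l) = 0 -> forall l, x l = 0.

Definition is_hom (k : fieldType) (r : nat) (M N : krep k r)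
    (f1 : 'M[k]_(dim1 M, dim1 N)) (f2 : 'M[k]_(dim2 M, dim2 N)) : Prop :=
  forall i, arr M i *m f2 = f1 *m arr N i.

Definition short_exact (k : fieldType) (p q s : nat)
    (f : 'M[k]_(p, q)) (g : 'M[k]_(q, s)) : Prop :=
  [/\ row_free f, row_full g & (f == kermx g)%MS].

Definition aP0 (k : fieldType) (r a : nat) : krep k r :=
  @KRep k r 0 a (fun _ => 0).

Definition ses (k : fieldType) (r : nat) (L M N : krep k r) : Prop :=
  exists (f1 : 'M[k]_(dim1 L, dim1 M)) (f2 : 'M[k]_(dim2 L, dim2 M))
         (g1 : 'M[k]_(dim1 M, dim1 N)) (g2 : 'M[k]_(dim2 M, dim2 N)),
    [/\ is_hom f1 f2, is_hom g1 g2, short_exact f1 g1 & short_exact f2 g2].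

(* Main.v *)
Require Import Defs.
Set Warnings "-notation-overridden -ambiguous-paths".
From HB Require Import structures.
From mathcomp Require Import all_boot all_order all_algebra zify.
From Stdlib Require Import FunctionalExtensionality.
Set Implicit Arguments. Unset Strict Implicit. Unset Printing Implicit Defensive.
Import Order.TTheory GRing.Theory Num.Theory.
Local Open Scope ring_scope.
Section Pol.
Variable k : fieldType.
Variable X : finType.

Definition mono E (b : {ffun X -> 'I_E}) (z : X -> k) : k := \prod_x z x ^+ b x.
Definition pol E (f : (X -> k) -> k) :=
  exists a : {ffun X -> 'I_E} -> k, forall z, f z = \sum_b a b * mono b z.

Lemma pol_ext E f g : (forall z, f z = g z) -> pol E f -> pol E g.
Proof. by move=> fg [a ha]; exists a => z; rewrite -fg ha. Qed.

Lemma pol0 E : pol E (fun _ => 0).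
Proof. by exists (fun _ => 0) => z; rewrite big1 // => b _; rewrite mul0r. Qed.

Lemma polD E f g : pol E f -> pol E g -> pol E (fun z => f z + g z).
Proof.
move=> [a ha] [b hb]; exists (fun x => a x + b x) => z.
by rewrite ha hb -big_split /=; apply: eq_bigr => i _; rewrite mulrDl.
Qed.

Lemma polZ E c f : pol E f -> pol E (fun z => c * f z).
Proof.
move=> [a ha]; exists (fun x => c * a x) => z.
by rewrite ha mulr_sumr; apply: eq_bigr => i _; rewrite mulrA.
Qed.

Lemma pol_sum E (I : Type) (s : seq I) (F : I -> (X -> k) -> k) :
  (forall i, pol E (F i)) -> pol E (fun z => \sum_(i <- s) F i z).
Proof.
move=> hF; elim: s => [|i s IH].
  by apply: pol_ext (pol0 E) => z; rewrite big_nil.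
by apply: pol_ext (polD (hF i) IH) => z; rewrite big_cons.
Qed.

Lemma pol_mono E (b : {ffun X -> 'I_E}) : pol E (mono b).
Proof.
exists (fun c => (c == b)%:R) => z.
rewrite (bigD1 b) //= eqxx mul1r big1 ?addr0 // => c /negPf ->; by rewrite mul0r.
Qed.

Lemma pol_widen E E' f : (E <= E')%N -> pol E f -> pol E' f.
Proof.
move=> le [a ha].
have hm : forall b : {ffun X -> 'I_E}, pol E' (mono b).
  move=> b; apply: pol_ext (pol_mono [ffun x => widen_ord le (b x)]) => z.
  by rewrite /mono; apply: eq_bigr => x _; rewrite ffunE.
apply: pol_ext (pol_sum (index_enum _) (fun b => polZ (a b) (hm b))) => z.
by rewrite ha.
Qed.

Lemma ltn_ord_add E1 E2 (i : 'I_E1) (j : 'I_E2) : (i + j < E1 + E2)%N.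
Proof. have := ltn_ord i; have := ltn_ord j; lia. Qed.

Lemma polM E1 E2 f g : pol E1 f -> pol E2 g -> pol (E1 + E2) (fun z => f z * g z).
Proof.
move=> [a ha] [b hb].
have hm : forall (c1 : {ffun X -> 'I_E1}) (c2 : {ffun X -> 'I_E2}),
    pol (E1 + E2) (fun z => mono c1 z * mono c2 z).
  move=> c1 c2.
  apply: pol_ext (pol_mono [ffun x => Ordinal (ltn_ord_add (c1 x) (c2 x))]) => z.
  rewrite /mono -big_split /=; apply: eq_bigr => x _; by rewrite ffunE exprD.
apply: pol_ext (pol_sum (index_enum _) (fun c1 => pol_sum (index_enum _)
   (fun c2 => polZ (a c1 * b c2) (hm c1 c2)))) => z.
rewrite ha hb mulr_suml; apply: eq_bigr => c1 _; rewrite mulr_sumr.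
by apply: eq_bigr => c2 _; rewrite mulrACA.
Qed.

Lemma pol1 : pol 1 (fun _ => 1).
Proof.
apply: pol_ext (pol_mono [ffun _ => ord0]) => z.
by rewrite /mono big1 // => x _; rewrite ffunE expr0.
Qed.

Lemma polC E c : (0 < E)%N -> pol E (fun _ => c).
Proof.
move=> E0; apply: pol_widen E0 _.
by apply: pol_ext (polZ c pol1) => z; rewrite mulr1.
Qed.

Lemma polX x : pol 2 (fun z => z x).
Proof.
apply: pol_ext (pol_mono [ffun y => if y == x then (1 : 'I_2) else ord0]) => z.
rewrite /mono (bigD1 x) //= ffunE eqxx expr1 big1 ?mulr1 // => y /negPf hy.
by rewrite ffunE hy expr0.
Qed.

Lemma polX2 E f j : pol E f -> pol (j * E).+1 (fun z => f z ^+ j).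
Proof.
move=> hf; elim: j => [|j IH].
  by apply: pol_ext pol1 => z; rewrite expr0.
apply: (pol_ext _ (pol_widen _ (polM IH hf))).
  by move=> z; rewrite exprSr.
by rewrite mulSn addSn addnC.
Qed.

Lemma pol_prod (I : Type) (s : seq I) (e : I -> nat) (F : I -> (X -> k) -> k) :
  (forall i, pol (e i) (F i)) ->
  pol (\sum_(i <- s) e i).+1 (fun z => \prod_(i <- s) F i z).
Proof.
move=> hF; elim: s => [|i s IH].
  by rewrite big_nil; apply: pol_ext pol1 => z; rewrite big_nil.
rewrite big_cons -addnS; apply: pol_ext (polM (hF i) IH) => z.
by rewrite big_cons.
Qed.

End Pol.
Lemma digit_bound D n (a : 'I_n -> nat) : (forall i, a i < D)%N ->
  (\sum_(i < n) a i * D ^ i < D ^ n)%N.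
Proof.
elim: n a => [|n IH] a ha; first by rewrite big_ord0 expn0.
rewrite big_ord_recr /= expnS.
have h1 := IH (fun i => a (widen_ord (leqnSn n) i)) (fun i => ha _).
have h2 := ha ord_max.
move: h1 h2; set S := (\sum_(i < n) _)%N; set P := (D ^ n)%N; set x := a ord_max.
move=> h1 h2; nia.
Qed.

Lemma digit_inj D n (a b : 'I_n -> nat) : (forall i, a i < D)%N -> (forall i, b i < D)%N ->
  (\sum_(i < n) a i * D ^ i = \sum_(i < n) b i * D ^ i)%N -> forall i, a i = b i.
Proof.
elim: n a b => [|n IH] a b ha hb; first by move=> _ [].
rewrite !big_ord_recr /=.
have sa := digit_bound (fun i => ha (widen_ord (leqnSn n) i)).
have sb := digit_bound (fun i => hb (widen_ord (leqnSn n) i)).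
move: sa sb; set Sa := (\sum_(i < n) _)%N; set Sb := (\sum_(i < n) _)%N.
set P := (D ^ n)%N => sa sb e.
have P0 : (0 < P)%N by move: sa; case: (P).
have em : Sa = Sb.
  have := congr1 (fun x => x %% P)%N e; rewrite /= ![(_ + a _ * _)%N]addnC.
  by rewrite ![(_ + b _ * _)%N]addnC !modnMDl !modn_small.
have ed : a ord_max = b ord_max.
  have := congr1 (fun x => x %/ P)%N e; rewrite /= ![(_ + a _ * _)%N]addnC.
  by rewrite ![(_ + b _ * _)%N]addnC !divnMDl // !divn_small // !addn0.
have IH' := IH _ _ (fun i => ha (widen_ord (leqnSn n) i)) (fun i => hb (widen_ord (leqnSn n) i)) em.
move=> i; case: (ltnP i n) => hi.
  by have := IH' (Ordinal hi); congr (a _ = b _); apply: val_inj.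
have -> : i = ord_max by apply: val_inj => /=; have := ltn_ord i; lia.
exact: ed.
Qed.
Lemma closed_notin (k : closedFieldType) (s : seq k) : exists x, x \notin s.
Proof.
case: s => [|a0 s]; first by exists 0.
set q := \prod_(a <- a0 :: s) ('X - a%:P).
have sq : size q = (size s).+2 by rewrite size_prod_XsubC.
have sp : size (q + 1) = (size s).+2 by rewrite size_polyDl ?size_poly1 ?sq.
have [x rx] : exists x, root (q + 1) x by apply/closed_rootP; rewrite sp.
exists x; apply/negP => xs; move: rx; rewrite /root hornerD hornerC.
have -> : q.[x] = 0.
  apply/rootP; rewrite root_prod_XsubC //.
by rewrite add0r oner_eq0.
Qed.

Lemma closed_uniq (k : closedFieldType) m : exists s : seq k, uniq s /\ size s = m.
Proof.
elim: m => [|m [s [us ss]]]; first by exists [::].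
have [x xs] := closed_notin s; exists (x :: s); by rewrite /= xs us ss.
Qed.

Lemma exists_nonroot (k : closedFieldType) (q : {poly k}) : q != 0 -> exists x, ~~ root q x.
Proof.
move=> q0; have [s [us ss]] := closed_uniq k (size q).
case: (boolP (all (root q) s)) => [al|].
  by have := max_poly_roots q0 al us; rewrite ss ltnn.
by case/allPn => x _ nr; exists x.
Qed.

Lemma ker_nonzero (k : fieldType) p q (A : 'M[k]_(p, q)) : (q < p)%N ->
  exists w : 'rV_p, w != 0 /\ w *m A = 0.
Proof.
move=> qp.
have rk : (0 < \rank (kermx A))%N.
  by rewrite mxrank_ker; have := rank_leq_col A; lia.
have [i hi] : exists i, row i (kermx A) != 0.
  apply/existsP; apply: contraTT rk => /existsPn h.
  suff -> : kermx A = 0 by rewrite mxrank0.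
  by apply/row_matrixP => i; rewrite row0; apply/eqP; rewrite -[_ == _]negbK h.
by exists (row i (kermx A)); split => //; rewrite -row_mul mulmx_ker row0.
Qed.

Lemma arith_aux c Q P R D : D = (c*Q+1)%N -> (D*P <= R)%N -> (0 < P)%N -> (c*(P*Q) < R)%N.
Proof. move=> ->; nia. Qed.

Lemma key (k : closedFieldType) (X C : finType) n e (F : C -> (X -> k) -> 'rV[k]_n) :
  (#|X| < n)%N -> (forall c t, pol e (fun z => F c z 0 t)) ->
  exists u : 'rV_n, forall c z, F c z != u.
Proof.
move=> Xn hF.
set N := #|X|.
set K := (n * e + n + 1)%N.
set D := (#|C| * K ^ N + 1)%N.
set E' := (D * K)%N.
have D0 : (0 < D)%N by rewrite /D addn1.
have hb : forall c (a : {ffun 'I_n -> 'I_D}),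
    pol E' (fun z => \prod_(t < n) F c z 0 t ^+ a t).
  move=> c a.
  have h := pol_prod (index_enum 'I_n) (fun t => polX2 (a t) (hF c t)).
  apply: pol_widen h.
  have le1 : (\sum_(t < n) ((a t) * e).+1 <= \sum_(t < n) (D * e).+1)%N.
    by apply: leq_sum => t _; rewrite ltnS leq_mul2r ltnW ?orbT.
  rewrite sum_nat_const card_ord in le1.
  rewrite /E' /K; move: le1 D0; set S := (\sum_(t < n) _)%N; nia.
have [b hbb] : exists b : C -> {ffun 'I_n -> 'I_D} -> {ffun X -> 'I_E'} -> k,
    forall c (a : {ffun 'I_n -> 'I_D}) z, \prod_(t < n) F c z 0 t ^+ a t = \sum_bb b c a bb * mono bb z.
  have h1 : forall c, exists bc : {ffun 'I_n -> 'I_D} -> {ffun X -> 'I_E'} -> k,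
      forall (a : {ffun 'I_n -> 'I_D}) z, \prod_(t < n) F c z 0 t ^+ a t = \sum_bb bc a bb * mono bb z.
    move=> c; have h2 := fun a => hb c a.
    case: (@fin_all_exists _ (fun _ => {ffun X -> 'I_E'} -> k) _ h2) => bc hbc.
    by exists bc.
  by case: (@fin_all_exists _ (fun _ => {ffun 'I_n -> 'I_D} -> {ffun X -> 'I_E'} -> k) _ h1) => b' hb'; exists b'.
pose A := {ffun 'I_n -> 'I_D}.
pose B := {ffun X -> 'I_E'}.
pose Mx : 'M[k]_(#|A|, #|{: C * B}|) :=
  \matrix_(i, j) b (enum_val j).1 (enum_val i) (enum_val j).2.
have card_lt : (#|{: C * B}| < #|A|)%N.
  rewrite card_prod !card_ffun !card_ord -/N.
  have h1 : (D ^ N.+1 <= D ^ n)%N by apply: leq_pexp2l.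
  rewrite expnS in h1; rewrite /E' expnMn.
  have P0 : (0 < D ^ N)%N by rewrite expn_gt0 D0.
  exact: (arith_aux _ h1 P0).
have [w [w0 wM]] := ker_nonzero Mx card_lt.
have van : forall c z,
    \sum_(i < #|A|) w 0 i * \prod_(t < n) F c z 0 t ^+ (enum_val i : A) t = 0.
  move=> c z.
  under eq_bigr => i _ do rewrite hbb mulr_sumr.
  rewrite exchange_big /= big1 // => bb _.
  under eq_bigr => i _ do rewrite mulrA.
  rewrite -mulr_suml.
  have : (w *m Mx) 0 (enum_rank ((c, bb) : C * B)) = 0 by rewrite wM mxE.
  rewrite mxE => h.
  suff -> : \sum_(i < #|A|) w 0 i * b c (enum_val i) bb = 0 by rewrite mul0r.
  by rewrite -[RHS]h; apply: eq_bigr => i _; rewrite mxE enum_rankK.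
pose kap (i : 'I_#|A|) := (\sum_(t < n) (enum_val i : A) t * D ^ t)%N.
have kap_inj : injective kap.
  move=> i j hij; apply: enum_val_inj; apply/ffunP => t; apply: val_inj.
  exact: (digit_inj (fun t => ltn_ord _) (fun t => ltn_ord _) hij).
have [i0 wi0] : exists i0, w 0 i0 != 0.
  apply/existsP; apply: contraNT w0 => /existsPn h.
  by apply/eqP/rowP => i; rewrite mxE; have := h i; rewrite negbK => /eqP.
pose q : {poly k} := \sum_(i < #|A|) w 0 i *: 'X^(kap i).
have q0 : q != 0.
  have e1 : q`_(kap i0) = w 0 i0.
    rewrite /q coef_sumMXn (bigD1 i0) ?eqxx //= big1 ?addr0 //.
    move=> i /andP[h ne]; move: h => /eqP hk.
    by have ei := kap_inj _ _ hk; rewrite ei eqxx in ne.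
  by apply: contraNneq wi0 => qz; rewrite -e1 qz coef0.
have [s rs] := exists_nonroot q0.
exists (\row_t s ^+ (D ^ t)) => c z; apply/eqP => ez.
move: rs; rewrite /root; apply/negP; rewrite negbK.
have := van c z; rewrite ez => <-.
rewrite horner_sum; apply/eqP; apply: eq_bigr => i _.
rewrite hornerZ hornerXn; congr (_ * _).
rewrite /kap -prodrXr; apply: eq_bigr => t _.
by rewrite mxE -exprM mulnC.
Qed.

Section Split.
Variables (k : fieldType) (r d n : nat) (f : {ffun 'I_d -> 'I_r}) (j0 : 'I_r).
Hypothesis finj : injective f.
Definition gcomp : {ffun 'I_(r - d) -> 'I_r} :=
  [ffun b : 'I_(r - d) => nth j0 (enum (~: [set f a | a in 'I_d])) b].

Lemma split_sum (G : 'I_r -> 'rV[k]_n) :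
  \sum_j G j = \sum_a G (f a) + \sum_b G (gcomp b).
Proof.
rewrite (bigID (fun j => j \in [set f a | a in 'I_d])) /=.
congr (_ + _); first by rewrite big_imset //= => a b _ _ /finj.
have -> : \sum_(j | j \notin [set f a | a in 'I_d]) G j =
    \sum_(j in ~: [set f a | a in 'I_d]) G j by apply: eq_bigl => j; rewrite inE.
rewrite -big_enum (big_nth j0) -cardE.
have -> : #|~: [set f a | a in 'I_d]| = (r - d)%N.
  by rewrite cardsCs setCK card_imset // !card_ord.
by rewrite big_mkord; apply: eq_bigr => b _; rewrite ffunE.
Qed.
End Split.

Section Cover.
Variables (k : fieldType) (r d : nat) (N : krep k r).
Local Notation m := (dim1 N).
Local Notation n := (dim2 N).
Definition chartT := ({ffun 'I_d -> 'I_r} * {ffun 'I_(r - d) -> 'I_r})%type.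
Definition varT := (('I_d * 'I_(r - d)) + ('I_d * 'I_m))%type.
Definition Ymx (z : varT -> k) : 'M_(d, m) := \matrix_(a < d, s < m) z (inr (a, s)).
Definition Bmx (z : varT -> k) : 'M_(r - d, d) := \matrix_(b < r - d, a < d) z (inl (a, b)).
Definition Fm (c : chartT) (z : varT -> k) : 'rV_n :=
  \sum_(a < d) row a (Ymx z) *m arr N (c.1 a)
  + \sum_(b < r - d) (row b (Bmx z) *m Ymx z) *m arr N (c.2 b).

Lemma Fm_pol c t : pol 4 (fun z => Fm c z 0 t).
Proof.
have h1 : forall a s, pol 4 (fun z : varT -> k => arr N (c.1 a) s t * z (inr (a, s))).
  by move=> a s; apply: polZ; apply: pol_widen (polX _ _).
have h2 : forall b s, pol 4 (fun z : varT -> k => arr N (c.2 b) s t *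
    \sum_(a < d) (z (inl (a, b)) * z (inr (a, s)))).
  by move=> b s; apply: polZ; apply: pol_sum => a; exact: (polM (polX k (inl (a, b))) (polX k (inr (a, s)))).
apply: pol_ext (polD (pol_sum _ (fun a => pol_sum _ (h1 a)))
                     (pol_sum _ (fun b => pol_sum _ (h2 b)))) => z.
rewrite /Fm mxE !summxE; congr (_ + _).
  apply: eq_bigr => a _; rewrite mxE; apply: eq_bigr => s _.
  by rewrite !mxE mulrC.
apply: eq_bigr => b _; rewrite mxE; apply: eq_bigr => s _.
rewrite !mxE mulrC; congr (_ * _); apply: eq_bigr => a _; by rewrite !mxE.
Qed.



Lemma cover (V : 'M_(d, r)) (x : 'I_d -> 'rV_m) : (0 < r)%N -> row_free V ->
  exists c z, \sum_(l < d) psi_elem (row l V) (x l) = Fm c z.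
Proof.
move=> r0 rfV.
have hV : row_full V^T by rewrite /row_full mxrank_tr.
pose f := fullrankfun hV.
have finj : injective f by apply: fullrankfun_inj.
pose Q := rowsub f V^T.
have Qu : Q \in unitmx by apply: fullrowsub_unit.
pose j0 : 'I_r := Ordinal r0.
pose g := gcomp f j0.
pose X0 : 'M_(d, m) := \matrix_(l < d, s < m) x l 0 s.
pose W := V^T *m invmx Q.
pose Y := Q *m X0.
have eT : V^T *m X0 = W *m Y by rewrite mulmxA mulmxKV.
have rWf : forall a, row (f a) W = row a 1%:M.
  by move=> a; rewrite /W row_mul -(row_rowsub f) -row_mul mulmxV.
pose z : varT -> k := fun v => match v with inl p => W (g p.2) p.1 | inr p => Y p.1 p.2 end.
exists (f, g), z.
have eY : Ymx z = Y.
  by apply/matrixP => a s; rewrite mxE.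
have eB : forall b, row b (Bmx z) = row (g b) W.
  by move=> b; apply/rowP => a; rewrite [LHS]mxE [LHS]mxE [RHS]mxE.
rewrite /Fm eY.
idtac.
have -> : \sum_(l < d) psi_elem (row l V) (x l) =
    \sum_(j < r) row j (V^T *m X0) *m arr N j.
  rewrite /psi_elem exchange_big /=; apply: eq_bigr => j _.
  rewrite row_mul (mulmx_sum_row (row j V^T)) mulmx_suml; apply: eq_bigr => l _.
  rewrite -scalemxAl !mxE; congr (_ *: (_ *m _)).
  by apply/rowP => s; rewrite !mxE.
rewrite (split_sum j0 finj) eT; congr (_ + _).
  by apply: eq_bigr => a _; rewrite row_mul rWf -row_mul mul1mx.
by apply: eq_bigr => b _; rewrite row_mul eB.
Qed.
End Cover.

Lemma psi_elemM (k : fieldType) r m n n' (A : 'I_r -> 'M[k]_(m, n)) (G : 'M_(n, n')) v y :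
  @psi_elem _ _ (KRep (fun i => A i *m G)) v y = @psi_elem _ _ (KRep A) v y *m G.
Proof.
rewrite /psi_elem /= mulmx_suml; apply: eq_bigr => j _.
by rewrite -scalemxAl mulmxA.
Qed.

Lemma psi_elemZ (k : fieldType) r (N : krep k r) v (c : k) y :
  @psi_elem _ _ N v (c *: y) = c *: @psi_elem _ _ N v y.
Proof.
rewrite /psi_elem scaler_sumr; apply: eq_bigr => j _.
by rewrite -scalemxAl scalerA mulrC -scalerA scalemxAl.
Qed.

Lemma step (k : closedFieldType) r d (N : krep k r) : (0 < r)%N -> rep_proj d N ->
  (d * dim1 N + d * (r - d) < dim2 N)%N ->
  exists n' (G : 'M[k]_(dim2 N, n')), [/\ row_full G, n'.+1 = dim2 N &
     rep_proj d (KRep (fun i => arr N i *m G))].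
Proof.
move=> r0 rpN hn.
have cardX : #|{: varT d N}| = (d * (r - d) + d * dim1 N)%N.
  by rewrite /varT card_sum !card_prod !card_ord.
have [u hu] : exists u : 'rV_(dim2 N), forall (c : chartT r d) (z : varT d N -> k), @Fm k r d N c z != u.
  apply: (@key k (varT d N) (chartT r d) (dim2 N) 4 (@Fm k r d N)).
    by rewrite cardX addnC.
  exact: Fm_pol.
have hu2 : forall V x, row_free V -> \sum_(l < d) @psi_elem _ _ N (row l V) (x l) != u.
  move=> V x rfV; have [c [z ->]] := cover x r0 rfV; exact: hu.
pose j0 : 'I_r := Ordinal r0.
have u0 : u != 0.
  have := hu ([ffun _ => j0], [ffun _ => j0]) (fun _ => 0); apply: contraNneq => ->.
  apply/eqP; rewrite /Fm.
  have -> : Ymx (fun _ : varT d N => 0 : k) = 0 by apply/matrixP => a s; rewrite !mxE.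
  by rewrite !big1 ?addr0 // => i _; rewrite ?row0 ?mulmx0 mul0mx.
exists (\rank (cokermx u)), (col_base (cokermx u)); split.
- exact: col_base_full.
  by rewrite mxrank_coker rank_rV u0 subn1 prednK //; exact: leq_ltn_trans (leq0n _) hn.
move=> V rfV x hx.
have e1 : (\sum_(l < d) @psi_elem _ _ N (row l V) (x l)) *m col_base (cokermx u) = 0.
  by rewrite mulmx_suml -[RHS]hx; apply: eq_bigr => l _; rewrite -psi_elemM.
pose w := \sum_(l < d) @psi_elem _ _ N (row l V) (x l).
have : (w <= u)%MS.
  by rewrite submxE -(mulmx_base (cokermx u)) mulmxA e1 mul0mx.
case/submxP => D; rewrite /w => hD.
rewrite (mx11_scalar D) mul_scalar_mx in hD.
case: (eqVneq (D 0 0) 0) => hD0.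
  by apply: (rpN V rfV x); rewrite hD hD0 scale0r.
have := hu2 V (fun l => (D 0 0)^-1 *: x l) rfV.
rewrite (eq_bigr (fun l => (D 0 0)^-1 *: @psi_elem _ _ N (row l V) (x l))); last first.
  by move=> l _; rewrite psi_elemZ.
by rewrite -scaler_sumr hD scalerA mulVf // scale1r eqxx.
Qed.

Lemma row_full_mul (k : fieldType) p q s (A : 'M[k]_(p, q)) (B : 'M[k]_(q, s)) :
  row_full A -> row_full B -> row_full (A *m B).
Proof.
move=> /row_fullP [A' hA] /row_fullP [B' hB]; apply/row_fullP.
exists (B' *m A'); by rewrite mulmxA -(mulmxA B') hA mulmx1 hB.
Qed.

Lemma chain (k : closedFieldType) r d (t : nat) : (0 < r)%N -> forall N : krep k r,
  rep_proj d N -> (d * dim1 N + d * (r - d) + t <= dim2 N)%N ->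
  exists n' (G : 'M[k]_(dim2 N, n')), [/\ row_full G, (n' + t)%N = dim2 N &
     rep_proj d (KRep (fun i => arr N i *m G))].
Proof.
move=> r0; elim: t => [|t IH] N rpN hle.
  exists (dim2 N), 1%:M; split; first by rewrite /row_full mxrank1.
    by rewrite addn0.
  have -> : (fun i => arr N i *m 1%:M) = arr N.
    by apply: functional_extensionality => i; rewrite mulmx1.
  by case: N rpN {hle}.
have hlt : (d * dim1 N + d * (r - d) < dim2 N)%N by move: hle; lia.
have [n1 [G1 [rf1 e1 rp1]]] := step r0 rpN hlt.
have [|n' [G2 [rf2 e2 rp2]]] := IH _ rp1.
  by rewrite /=; move: hle; rewrite -e1; lia.
exists n', (G1 *m G2); split.
- exact: row_full_mul.
- by rewrite /= in e2; rewrite -e1 -e2 addnS.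
have -> : (fun i => arr N i *m (G1 *m G2)) = (fun i => arr N i *m G1 *m G2).
  by apply: functional_extensionality => i; rewrite mulmxA.
exact: rp2.
Qed.

Theorem proposition2p3p5 (k : closedFieldType) (r d : nat) (M : krep k r) :
  (2 <= r)%N -> (1 <= d)%N -> (d <= r - 1)%N ->
  rep_proj d M ->
  Delta M d > (d * (r - d))%:Z ->
  exists (a : nat) (Mmin : krep k r),
    [/\ (0 < a)%N, ses (aP0 k r a) M Mmin, rep_proj d Mmin &
        Delta Mmin d = (d * (r - d))%:Z].
Proof.
move=> r2 d1 dr rpM hD.
have r0 : (0 < r)%N by apply: leq_trans r2.
have hlt : (d * dim1 M + d * (r - d) < dim2 M)%N by move: hD; rewrite /Delta; lia.
pose t := (dim2 M - (d * dim1 M + d * (r - d)))%N.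
have [n' [G [rfG e rp]]] := @chain k r d t r0 M rpM (ltac:(rewrite /t; lia)).
have rkG : \rank G = n' by apply/eqP.
exists (\rank (kermx G)), (KRep (fun i => arr M i *m G)); split.
- by rewrite mxrank_ker rkG; move: e hlt; rewrite /t; lia.
- exists (0 : 'M[k]_(0, dim1 M)), (row_base (kermx G)), 1%:M, G; split.
  + by move=> i; rewrite /= !mul0mx.
  + by move=> i; rewrite /= mul1mx.
  + split.
    * by rewrite /row_free -leqn0 rank_leq_row.
    * by rewrite /row_full mxrank1.
    * have /eqP -> : kermx (1%:M : 'M[k]_(dim1 M)) == 0 by rewrite kermx_eq0 /row_free mxrank1.
      by apply/andP; split; rewrite sub0mx.
  + split.
    * exact: row_base_free.
    * exact: rfG.
    * by apply/eqmxP; exact: eq_row_base.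
- exact: rp.
- by rewrite /Delta /=; move: e hlt; rewrite /t; lia.
Qed.
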